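(* Let $\mathcal{F}\subset\mathbb{R}^d$ be a convex feasible set with bounded diameter $D_\infty$, i.e. $\|x-y\|_\infty\le D_\infty$ for all $x,y\in\mathcal{F}$. Let $f_1,\dots,f_T:\mathbb{R}^d\to\mathbb{R}$ be convex differentiable functions, and let $\theta^*\in\arg\min_{\theta\in\mathcal{F}}\sum_{t=1}^T f_t(\theta)$. Consider the AdaBelief iteration (without bias correction): starting from $\theta_1\in\mathcal{F}$, $m_0=0$, $s_0=0$, for $t=1,\dots,T$, $$g_t=\nabla f_t(\theta_t),\quad m_t=\beta_{1t}m_{t-1}+(1-\beta_{1t})g_t,\quad s_t=\beta_2 s_{t-1}+(1-\beta_2)(g_t-m_t)^2,$$ $$\theta_{t+1}=\Pi_{\mathcal{F},\sqrt{s_t}}\big(\theta_t-\alpha_t s_t^{-1/2}m_t\big),$$ where all operations on vectors are elementwise, $\Pi_{\mathcal{F},M}(y)=\arg\min_{x\in\mathcal{F}}\|M^{1/2}(x-y)\|$ (with $\sqrt{s_t}$ interpreted as the diagonal matrix with entries $\sqrt{s_{t,i}}$), and any small constant $\epsilon$ is regarded as absorbed into $s_t$. Assume $0\le\beta_2<1$, $\alpha_t=\alpha/\sqrt{t}$ with $\alpha>0$, $\beta_{11}=\beta_1$, $0\le\beta_{1t}\le\beta_1<1$, and $s_t\le s_{t+1}$ (elementwise) for all $t\in[T]$. Assume $\|g_t\|_\infty\le G_\infty/2$ (hence $\|g_t-m_t\|_\infty\le G_\infty$) and $s_{t,i}\ge c>0$ for all $t\in[T]$ and $i\in[d]$. Then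 $$\sum_{t=1}^T[f_t(\theta_t)-f_t(\theta^* )]\le \frac{D_\infty^2\sqrt{T}}{2\alpha(1-\beta_1)}\sum_{i=1}^d s_{T,i}^{1/2}+\frac{(1+\beta_1)\alpha\sqrt{1+\log T}}{2\sqrt{c}(1-\beta_1)^3}\sum_{i=1}^d\big\|g_{1:T,i}^2\big\|_2+\frac{D_\infty^2}{2(1-\beta_1)}\sum_{t=1}^T\sum_{i=1}^d\frac{\beta_{1t}s_{t,i}^{1/2}}{\alpha_t}.$$
   Context: $g_{t,i}$ and $s_{t,i}$ denote the $i$-th coordinates of $g_t$ and $s_t$; $g_{1:T,i}^2$ denotes the vector $(g_{1,i}^2,\dots,g_{T,i}^2)\in\mathbb{R}^T$, and $\|\cdot\|_2$ is the Euclidean norm. *)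

(* Defs.v *)
From HB Require Import structures.
From mathcomp Require Import all_boot all_order all_algebra.
From mathcomp Require Import all_classical all_reals all_analysis.
Set Implicit Arguments. Unset Strict Implicit. Unset Printing Implicit Defensive.
Import Order.TTheory GRing.Theory Num.Theory.
Import numFieldNormedType.Exports.
Local Open Scope ring_scope.
Local Open Scope classical_set_scope.

Section Defs.
Variables (R : realType) (d : nat).

Definition convex_fun (f : 'rV[R]_d -> R) : Prop :=
  forall x y (l : R), 0 <= l -> l <= 1 ->
    f (l *: x + (1 - l) *: y) <= l * f x + (1 - l) * f y.

(* gradient of f at x: the vector of the differential applied to the
   standard basis vectors (meaningful when f is differentiable at x) *)
Definition grad (f : 'rV[R]_d -> R) (x : 'rV[R]_d) : 'rV[R]_d :=
  \row_i ('d f x (delta_mx 0 i : 'rV[R]_d)).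

(* squared weighted distance ||M^{1/2}(x-y)||^2 with M = diag(w) *)
Definition wdist2 (w x y : 'rV[R]_d) : R :=
  \sum_(i < d) w 0 i * (x 0 i - y 0 i) ^+ 2.

Definition is_wproj (F : set 'rV[R]_d) (w y p : 'rV[R]_d) : Prop :=
  F p /\ forall x, F x -> wdist2 w p y <= wdist2 w x y.

End Defs.

(* Main.v *)
Require Import Defs.
From HB Require Import structures.
From mathcomp Require Import all_boot all_order all_algebra.
From mathcomp Require Import all_classical all_reals all_analysis.
From mathcomp Require Import ring lra.
Import Order.TTheory GRing.Theory Num.Theory.
Import numFieldNormedType.Exports.
Local Open Scope ring_scope.
Local Open Scope classical_set_scope.
Lemma right_of_punct (R : realType) (V : normedModType R) (g : R -> V) (l : V) :
  g @ 0^' --> l -> g @ 0^'+ --> l.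
Proof.
move=> cvfx A /cvfx /nbhs_ballP [_ /posnumP[e] xe_A].
exists e%:num => //= y xe_y; rewrite lt_def => /andP [xney _]; exact: xe_A.
Qed.
Lemma first_order (R : realType) d (f : 'rV[R]_d -> R) x y :
  convex_fun f -> differentiable f x -> 'd f x (y - x) <= f y - f x.
Proof.
move=> cf df.
have dv : derivable f x (y - x) by exact: diff_derivable.
rewrite -deriveE // /derive cvg_at_rightE //.
apply: limr_le; first by apply: right_of_punct; rewrite -cvg_at_rightE.
near=> h.
have h0 : 0 < h by near: h; exact: nbhs_right_gt.
have h1 : h <= 1 by near: h; apply: nbhs_right_le; exact: ltr01.
rewrite /= /GRing.scale /=.
have := cf y x h (ltW h0) h1.
have -> : h *: y + (1 - h) *: x = h *: (y - x) + x.
  by rewrite scalerBr scalerBl scale1r addrA addrAC. 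
move=> H.
rewrite ler_pdivrMl //. lra.
Unshelve. all: by end_near.
Qed.
Lemma diff_grad (R : realType) d (f : 'rV[R]_d -> R) x (v : 'rV[R]_d) :
  'd f x v = \sum_(i < d) v 0 i * grad f x 0 i.
Proof.
rewrite {1}(matrix_sum_delta v) big_ord1 linear_sum.
apply: eq_bigr => i _; rewrite linearZ /= /grad mxE.
by [].
Qed.
Lemma proj_ineq (R : realType) d (F : set 'rV[R]_d) (w y p z : 'rV[R]_d) :
  convex_set F -> (forall i, 0 <= w 0 i) ->
  is_wproj F w y p -> F z -> wdist2 w p z <= wdist2 w z y.
Proof.
move=> cF w0 [Fp pmin] Fz.
pose B := \sum_(i < d) w 0 i * (p 0 i - y 0 i) * (z 0 i - p 0 i).
pose C := \sum_(i < d) w 0 i * (z 0 i - p 0 i) ^+ 2.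
have E : forall l, wdist2 w (l *: z + (1 - l) *: p) y
    = wdist2 w p y + l * (2 * B) + l ^+ 2 * C.
  move=> l; rewrite /wdist2 /B /C !mulr_sumr -!big_split /=.
  by apply: eq_bigr => i _; rewrite !mxE; ring.
have H : forall l, 0 < l -> l <= 1 -> 0 <= 2 * B + l * C.
  move=> l l0 l1.
  have Fq : F (l *: z + (1 - l) *: p).
    have := cF z p (Itv01 (ltW l0) l1).
    rewrite !inE /=. 
    by move=> /(_ Fz Fp).
  have := pmin _ Fq; rewrite E => h.
  rewrite -(pmulr_rge0 _ l0).
  have -> : l * (2 * B + l * C) = l * (2 * B) + l ^+ 2 * C by ring.
  lra.
have C0 : 0 <= C by apply: sumr_ge0 => i _; apply: mulr_ge0 => //; exact: sqr_ge0.
have B0 : 0 <= B.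
  rewrite leNgt; apply/negP => Bn.
  have CB : 0 < C - B by lra.
  have := H (- B / (C - B)).
  have l0 : 0 < - B / (C - B) by apply: divr_gt0 => //; lra.
  have l1 : - B / (C - B) <= 1 by rewrite ler_pdivrMr //; lra.
  move=> /(_ l0 l1).
  have : - B / (C - B) * C <= - B.
    rewrite mulrAC ler_pdivrMr // mulrC; nra.
  lra.
have P0 : 0 <= wdist2 w p y.
  by apply: sumr_ge0 => i _; apply: mulr_ge0 => //; exact: sqr_ge0.
have -> : wdist2 w z y = C + 2 * B + wdist2 w p y.
  rewrite /wdist2 /B /C mulr_sumr -!big_split /=.
  by apply: eq_bigr => i _; ring.
have -> : wdist2 w p z = C.
  by rewrite /wdist2 /C; apply: eq_bigr => i _; ring.
lra.
Qed.
Lemma abel (R : realType) (v y : nat -> R) (D : R) T :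
  (1 <= T)%N ->
  (forall t, (1 <= t)%N -> (t < T)%N -> v t <= v t.+1) -> 0 <= v 1%N ->
  (forall t, (1 <= t <= T)%N -> y t <= D) -> (forall t, 0 <= y t) ->
  \sum_(1 <= t < T.+1) v t * (y t - y t.+1) <= v T * D.
Proof.
move=> T1 vm v1 yD y0.
have key : forall n, (1 <= n <= T)%N ->
  \sum_(1 <= t < n.+1) v t * (y t - y t.+1) <= v n * D - v n * y n.+1 /\ 0 <= v n.
  elim=> [//|n IH] /andP[_ nT].
  case: n IH nT => [_ _|n IH nT].
    rewrite big_nat1; split=> //.
    have := yD 1%N; rewrite T1 => /(_ isT) h. nra.
  have [IH1 IH2] := IH (ltnW nT).
  have vmn := vm n.+1 isT nT.
  have yn := yD n.+2 nT.
  rewrite big_nat_recr //=; split; last by lra.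
  have : 0 <= (v n.+2 - v n.+1) * (D - y n.+2) by apply: mulr_ge0; lra.
  lra.
have [h1 h2] := key T (andb_true_intro (conj T1 (leqnn T))).
have := y0 T.+1; nra.
Qed.

Lemma mom_sum (R : realType) (a gg : nat -> R) (b : R) T :
  0 <= b -> b < 1 -> a 0%N = 0 -> (forall t, 0 <= a t) -> (forall t, 0 <= gg t) ->
  (forall t, (1 <= t <= T)%N -> a t <= gg t + b * a t.-1) ->
  \sum_(1 <= t < T.+1) a t.-1 / Num.sqrt t%:R
    <= (1 - b)^-1 * \sum_(1 <= t < T.+1) gg t / Num.sqrt t%:R.
Proof.
move=> b0 b1 a0 ap gp ha.
pose S n := \sum_(1 <= t < n.+1) a t.-1 / Num.sqrt t%:R.
pose P n := \sum_(1 <= t < n.+1) gg t / Num.sqrt t%:R.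
have inv : forall n, (n < T)%N -> S n.+1 - b * S n <= P n.
  elim=> [_|n IH nT].
    by rewrite /S /P big_nat1 !big_geq //= a0 mul0r mulr0 subr0.
  have IH' := IH (ltnW nT).
  have E1 : S n.+2 = S n.+1 + a n.+1 / Num.sqrt n.+2%:R by rewrite /S big_nat_recr.
  have E2 : P n.+1 = P n + gg n.+1 / Num.sqrt n.+1%:R by rewrite /P big_nat_recr.
  have E3 : S n.+1 = S n + a n / Num.sqrt n.+1%:R by rewrite /S big_nat_recr.
  rewrite E1 E2 [in b * _]E3.
  have h := ha n.+1 (ltnW nT).
  have s1 : 0 < Num.sqrt (n.+1)%:R :> R by rewrite sqrtr_gt0 ltr0n.
  have s2 : Num.sqrt (n.+1)%:R <= Num.sqrt (n.+2)%:R :> R by rewrite ler_sqrt ?ler_nat.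
  have e1 : a n.+1 / Num.sqrt n.+2%:R <= a n.+1 / Num.sqrt n.+1%:R.
    apply: ler_pM => //.
    by rewrite lef_pV2 // ?posrE // ?sqrtr_gt0 ?ltr0n.
  have e2 : a n.+1 / Num.sqrt n.+1%:R <= gg n.+1 / Num.sqrt n.+1%:R + b * (a n / Num.sqrt n.+1%:R).
    rewrite mulrA -mulrDl; apply: ler_pM => //; by rewrite invr_ge0 sqrtr_ge0.
  simpl in e2. lra.
rewrite ler_pdivlMl; last by lra.
case: T ha inv => [|n] ha inv; first by rewrite !big_geq //; lra.
have := inv n (ltnSn n).
have SS : S n <= S n.+1.
  rewrite /S [in X in _ <= X]big_nat_recr //= lerDl; apply: divr_ge0 => //; exact: sqrtr_ge0.
have PP : P n <= P n.+1.
  rewrite /P [in X in _ <= X]big_nat_recr //= lerDl; apply: divr_ge0 => //; exact: sqrtr_ge0.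
rewrite /S /P in SS PP *.
nra.
Qed.
Lemma harmonic (R : realType) n : (1 <= n)%N ->
  \sum_(1 <= t < n.+1) (t%:R : R)^-1 <= 1 + ln n%:R.
Proof.
elim: n => [//|n IH] _.
case: n IH => [_|n IH]; first by rewrite big_nat1 ln1 invr1 addr0.
have {}IH := IH isT.
rewrite big_nat_recr //=.
suff H : (n.+2%:R : R)^-1 <= ln n.+2%:R - ln n.+1%:R.
  have E : forall a b : R, (1 + a) + (b - a) = 1 + b by move=> a b; ring.
  by apply: (le_trans (lerD IH H)); rewrite E.
have h := @le_ln1Dx R (- (n.+2%:R)^-1).
have hn : 0 < (n.+2%:R : R) by rewrite ltr0n.
have : -1 < - (n.+2%:R : R)^-1.
  rewrite ltrN2 invf_lt1 // ltr1n //.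
move=> /h.
have -> : 1 - (n.+2%:R : R)^-1 = n.+1%:R / n.+2%:R.
  have hn' : (n.+2%:R : R) = 1 + n.+1%:R by rewrite mulrS.
  rewrite hn'; field; rewrite gt_eqF //; have := ler0n R n; lra.
have := @ln_div R n.+1%:R n.+2%:R; rewrite !posrE !ltr0n => /(_ isT isT) -> H.
by rewrite -[X in X <= _]opprK lerNl opprB.
Qed.

Lemma cs_psi (R : realType) (gg : nat -> R) T :
  \sum_(1 <= t < T.+1) gg t / Num.sqrt t%:R
    <= Num.sqrt (\sum_(1 <= t < T.+1) gg t ^+ 2) * Num.sqrt (1 + ln T%:R).
Proof.
case: T => [|T]; first by rewrite big_geq // mulr_ge0 ?sqrtr_ge0.
set X := \sum_(1 <= t < T.+2) gg t / Num.sqrt t%:R.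
set A := \sum_(1 <= t < T.+2) gg t ^+ 2.
set B := \sum_(1 <= t < T.+2) (t%:R : R)^-1.
have key : forall k, 0 < k -> X <= (k * A + B / k) / 2.
  move=> k k0.
  rewrite /X /A /B mulr_sumr mulr_suml -big_split /= mulr_suml.
  apply: ler_sum_nat => t /andP[t1 _].
  have st : 0 < Num.sqrt (t%:R : R) by rewrite sqrtr_gt0 ltr0n.
  have e : (t%:R : R)^-1 = (Num.sqrt t%:R)^-1 ^+ 2.
    by rewrite exprVn sqr_sqrtr ?ler0n.
  rewrite e.
  set u := (Num.sqrt (t%:R : R))^-1.
  have : 0 <= (k * gg t - u) ^+ 2 by exact: sqr_ge0.
  move=> h.
  rewrite -subr_ge0.
  have -> : (k * gg t ^+ 2 + u ^+ 2 / k) / 2 - gg t * u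
     = (k * gg t - u) ^+ 2 / (2 * k).
    by field; rewrite gt_eqF.
  apply: divr_ge0 => //; apply: mulr_ge0 => //; exact: ltW.
have B1 : 1 <= B.
  rewrite /B big_ltn // invr1 lerDl; apply: sumr_ge0 => t _; by rewrite invr_ge0 ler0n.
have A0 : 0 <= A by apply: sumr_ge0 => t _; exact: sqr_ge0.
have XB : X <= Num.sqrt A * Num.sqrt B.
  have [Ap|A00] := ltrP 0 A.
    have sA : 0 < Num.sqrt A by rewrite sqrtr_gt0.
    have sB : 0 < Num.sqrt B by rewrite sqrtr_gt0; lra.
    have := key (Num.sqrt B / Num.sqrt A) (divr_gt0 sB sA).
    have -> : (Num.sqrt B / Num.sqrt A * A + B / (Num.sqrt B / Num.sqrt A)) / 2
       = Num.sqrt A * Num.sqrt B.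
      rewrite -{2}(sqr_sqrtr A0) -{2}(@sqr_sqrtr _ B) ?(le_trans ler01 B1) //.
      by field; apply/andP; split; rewrite gt_eqF.
    by [].
  have A00' : A = 0 by apply/eqP; rewrite eq_le A00 A0.
  rewrite A00' sqrtr0 mul0r.
  rewrite leNgt; apply/negP => Xp.
  have := key (B / X) (divr_gt0 (lt_le_trans ltr01 B1) Xp).
  rewrite A00' mulr0 add0r.
  have -> : B / (B / X) / 2 = X / 2.
    by field; apply/andP; split; rewrite gt_eqF //; exact: (lt_le_trans ltr01 B1).
  lra.
apply: (le_trans XB); apply: ler_wpM2l; first exact: sqrtr_ge0.
by rewrite ler_sqrt ?harmonic // addr_ge0 // ln_ge0 // ler1n.
Qed.
Lemma step_alg (R : realType) (g m m' x w a r : R) :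
  0 < w -> 0 < a -> 0 <= r -> r < 1 -> m = r * m' + (1 - r) * g ->
  g * x <= (w * x ^+ 2 - w * (x - a * m / w) ^+ 2) / (2 * a)
           + r * w * x ^+ 2 / (2 * a * (1 - r))
           + a * ((1 - r) * g ^+ 2 + r * m' ^+ 2) / (2 * w).
Proof.
move=> w0 a0 r0 r1 ->.
rewrite -subr_ge0.
have -> : (w * x ^+ 2 - w * (x - a * (r * m' + (1 - r) * g) / w) ^+ 2) / (2 * a)
           + r * w * x ^+ 2 / (2 * a * (1 - r))
           + a * ((1 - r) * g ^+ 2 + r * m' ^+ 2) / (2 * w) - g * x
   = r * (w * x - a * (1 - r) * (g - m')) ^+ 2 / (2 * a * (1 - r) * w).
  field; rewrite !gt_eqF //; lra.
apply: divr_ge0; first by apply: mulr_ge0 => //; exact: sqr_ge0.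
apply: mulr_ge0; last exact: ltW.
apply: mulr_ge0; last by lra.
lra.
Qed.
Lemma aux_sq (R : realType) (x D : R) : `|x| <= D -> x ^+ 2 <= D ^+ 2.
Proof. rewrite ler_norml => /andP[h1 h2]; nra. Qed.

Lemma aux_b (R : realType) (r w a X D b : R) :
  0 <= r -> r <= b -> b < 1 -> 0 <= w -> 0 < a -> 0 <= X -> X <= D ->
  r * w * X / (2 * a * (1 - r)) <= r * w * D / (2 * a * (1 - b)).
Proof.
move=> r0 rb b1 w0 a0 X0 XD.
rewrite -subr_ge0.
have -> : r * w * D / (2 * a * (1 - b)) - r * w * X / (2 * a * (1 - r))
  = r * w * (D * (1 - r) - X * (1 - b)) / (2 * a * (1 - r) * (1 - b)).
  by field; rewrite !gt_eqF //; lra.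
apply: divr_ge0; first by apply: mulr_ge0; [exact: mulr_ge0| nra].
apply: mulr_ge0; last by lra.
apply: mulr_ge0; last by lra.
lra.
Qed.

Lemma aux_c (R : realType) (al st sc w r b G M : R) :
  0 < al -> 0 < st -> 0 < sc -> sc <= w -> 0 <= r -> r <= b -> 0 <= G -> 0 <= M ->
  r <= 1 ->
  al / st * ((1 - r) * G + r * M) / (2 * w) <= al / (2 * sc) * ((G + b * M) / st).
Proof.
move=> al0 st0 sc0 scw r0 rb G0 M0 r1.
have w0 : 0 < w by exact: lt_le_trans scw.
have -> : al / st * ((1 - r) * G + r * M) / (2 * w)
   = al / (2 * st) * (((1 - r) * G + r * M) / w).
  by field; rewrite !gt_eqF.
have -> : al / (2 * sc) * ((G + b * M) / st) = al / (2 * st) * ((G + b * M) / sc).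
  by field; rewrite !gt_eqF.
apply: ler_wpM2l; first by apply: divr_ge0; [exact: ltW| lra].
apply: ler_pM; first by nra.
- by rewrite invr_ge0; exact: ltW.
- by nra.
- by rewrite lef_pV2 ?posrE.
Qed.

Lemma aux_v (R : realType) (al w1 w2 st1 st2 : R) :
  0 < al -> 0 <= w1 -> w1 <= w2 -> 0 < st1 -> st1 <= st2 ->
  w1 / (al / st1) <= w2 / (al / st2).
Proof.
move=> al0 w10 w12 s10 s12.
rewrite !invf_div !mulrA; apply: ler_wpM2r; first by rewrite invr_ge0; exact: ltW.
apply: ler_pM => //; exact: ltW.
Qed.

Lemma aux_d (R : realType) (X y b : R) :
  0 <= X -> 0 < y -> 0 <= b -> b < 1 -> X / y <= X / (y * (1 - b)).
Proof.
move=> X0 y0 b0 b1.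
rewrite invfM mulrA ler_peMr //; first by apply: divr_ge0 => //; exact: ltW.
by rewrite invf_ge1; lra.
Qed.

Lemma aux_C (R : realType) (al sc b Psi M G L : R) :
  0 < al -> 0 < sc -> 0 <= b -> b < 1 -> 0 <= Psi ->
  M <= (1 - b)^-1 * Psi -> Psi <= G * L ->
  al / (2 * sc) * (Psi + b * M) <= (1 + b) * al * L / (2 * sc * (1 - b) ^+ 3) * G.
Proof.
move=> al0 sc0 b0 b1 P0 hM hP.
have q0 : 0 < 1 - b by lra.
have h1 : Psi + b * M <= (1 - b)^-1 * Psi.
  have hb : b * M <= b * ((1 - b)^-1 * Psi) by exact: ler_wpM2l.
  have -> : (1 - b)^-1 * Psi = Psi + b * ((1 - b)^-1 * Psi).
    by field; rewrite gt_eqF.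
  lra.
have h2 : (1 - b)^-1 * Psi <= (1 - b)^-1 * (G * L).
  by apply: ler_wpM2l => //; rewrite invr_ge0; exact: ltW.
have h3 : (1 - b)^-1 * (G * L) <= (1 + b) / (1 - b) ^+ 3 * (G * L).
  apply: ler_wpM2r; first exact: le_trans hP.
  rewrite ler_pdivlMr ?exprn_gt0 //.
  have -> : (1 - b)^-1 * (1 - b) ^+ 3 = (1 - b) ^+ 2.
    by field; rewrite gt_eqF.
  nra.
have -> : (1 + b) * al * L / (2 * sc * (1 - b) ^+ 3) * G
   = al / (2 * sc) * ((1 + b) / (1 - b) ^+ 3 * (G * L)).
  by field; rewrite !gt_eqF // exprn_gt0.
apply: ler_wpM2l; first by apply: divr_ge0; [exact: ltW | lra].
exact: le_trans h1 (le_trans h2 h3).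
Qed.

Theorem theorem2p1 (R : realType) (d T : nat)
  (F : set 'rV[R]_d) (Dinf Ginf c alpha beta1 beta2 eps : R)
  (f : nat -> 'rV[R]_d -> R) (theta_star : 'rV[R]_d)
  (theta g m s : nat -> 'rV[R]_d) (beta1t : nat -> R) :
  convex_set F ->
  (forall x y, F x -> F y -> forall i, `|x 0 i - y 0 i| <= Dinf) ->
  (forall t, (1 <= t <= T)%N -> convex_fun (f t)) ->
  (forall t, (1 <= t <= T)%N -> forall x, differentiable (f t) x) ->
  F theta_star ->
  (forall x, F x -> \sum_(1 <= t < T.+1) f t theta_star <= \sum_(1 <= t < T.+1) f t x) ->
  (* AdaBelief iteration; eps >= 0 is the small constant absorbed into s_t *)
  0 <= eps ->
  F (theta 1%N) ->
  m 0%N = 0 -> s 0%N = 0 ->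
  (forall t, (1 <= t <= T)%N -> g t = grad (f t) (theta t)) ->
  (forall t, (1 <= t <= T)%N ->
     m t = beta1t t *: m t.-1 + (1 - beta1t t) *: g t) ->
  (forall t, (1 <= t <= T)%N -> forall i,
     s t 0 i = beta2 * s t.-1 0 i + (1 - beta2) * (g t 0 i - m t 0 i) ^+ 2 + eps) ->
  (forall t, (1 <= t <= T)%N ->
     is_wproj F (\row_i Num.sqrt (s t 0 i)) 
       (\row_i (theta t 0 i - alpha / Num.sqrt t%:R * m t 0 i / Num.sqrt (s t 0 i)))
       (theta t.+1)) ->
  0 <= beta2 -> beta2 < 1 ->
  0 < alpha ->
  beta1t 1%N = beta1 ->
  (forall t, (1 <= t <= T)%N -> 0 <= beta1t t /\ beta1t t <= beta1) ->
  beta1 < 1 ->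
  (forall t, (1 <= t <= T)%N -> forall i, s t 0 i <= s t.+1 0 i) ->
  (forall t, (1 <= t <= T)%N -> forall i, `|g t 0 i| <= Ginf / 2) ->
  0 < c ->
  (forall t, (1 <= t <= T)%N -> forall i, c <= s t 0 i) ->
  \sum_(1 <= t < T.+1) (f t (theta t) - f t theta_star)
  <= Dinf ^+ 2 * Num.sqrt T%:R / (2 * alpha * (1 - beta1))
       * \sum_(i < d) Num.sqrt (s T 0 i)
   + (1 + beta1) * alpha * Num.sqrt (1 + ln T%:R)
       / (2 * Num.sqrt c * (1 - beta1) ^+ 3)
       * \sum_(i < d) Num.sqrt (\sum_(1 <= t < T.+1) (g t 0 i ^+ 2) ^+ 2)
   + Dinf ^+ 2 / (2 * (1 - beta1))
       * \sum_(1 <= t < T.+1) \sum_(i < d)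
           beta1t t * Num.sqrt (s t 0 i) / (alpha / Num.sqrt t%:R).
Proof.
move=> cF Dh fconv fdiff Fst _ eps0 Fth1 m0 s0 hg hm hs hproj b20 b21 al0 b1e hb1t
  b1lt1 smon gb c0 sc.
case: T fconv fdiff hg hm hs hproj hb1t smon gb sc =>
  [|T] fconv fdiff hg hm hs hproj hb1t smon gb sc.
  rewrite !big_geq // sqrtr0 mulr0 !mul0r add0r big1 ?mulr0 ?addr0 //.
  by move=> i _; rewrite big_geq // sqrtr0.
have N1 : (1 <= T.+1)%N by [].
move: (T.+1) N1 fconv fdiff hg hm hs hproj hb1t smon gb sc => {T} N N1 fconv fdiff hg hm hs hproj hb1t smon gb sc.
have b10 : 0 <= beta1 by have := hb1t 1%N N1; rewrite b1e => -[].
have hr : forall t, (1 <= t <= N)%N -> 0 <= beta1t t /\ beta1t t < 1.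
  move=> t Ht; have [h1 h2] := hb1t t Ht; split => //; exact: le_lt_trans b1lt1.
have sc0 : 0 < Num.sqrt c by rewrite sqrtr_gt0.
have ws : forall t i, (1 <= t <= N)%N ->
    Num.sqrt c <= Num.sqrt (s t 0 i) /\ 0 < Num.sqrt (s t 0 i).
  move=> t i Ht; have h := sc t Ht i.
  split; first exact: ler_wsqrtr.
  by rewrite sqrtr_gt0; exact: lt_le_trans h.
have Fth : forall t, (1 <= t <= N)%N -> F (theta t).
  case=> [//|[|t]] Ht; first exact: Fth1.
  have Ht' : (1 <= t.+1 <= N)%N by move: Ht => /andP[_ h]; rewrite /= ltnW.
  by case: (hproj t.+1 Ht').
have xD : forall t i, (1 <= t <= N)%N ->
    (theta t 0 i - theta_star 0 i) ^+ 2 <= Dinf ^+ 2.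
  by move=> t i Ht; apply: aux_sq; apply: Dh => //; exact: Fth.
have st0 : forall t, (1 <= t)%N -> 0 < Num.sqrt (t%:R : R).
  by move=> t t1; rewrite sqrtr_gt0 ltr0n.
have at0 : forall t, (1 <= t)%N -> 0 < alpha / Num.sqrt (t%:R : R).
  by move=> t t1; apply: divr_gt0 => //; exact: st0.
have S1 : \sum_(1 <= t < N.+1) (f t (theta t) - f t theta_star)
    <= \sum_(1 <= t < N.+1) \sum_(i < d) g t 0 i * (theta t 0 i - theta_star 0 i).
  apply: ler_sum_nat => t Ht.
  have := @first_order _ _ (f t) (theta t) theta_star (fconv t Ht) (fdiff t Ht (theta t)).
  rewrite diff_grad -(hg t Ht).
  have -> : \sum_(i < d) (theta_star - theta t) 0 i * g t 0 i
      = - \sum_(i < d) g t 0 i * (theta t 0 i - theta_star 0 i).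
    rewrite -sumrN; apply: eq_bigr => i _; rewrite !mxE; ring.
  by rewrite lerNl opprB.
have S2 : forall t, (1 <= t <= N)%N ->
  \sum_(i < d) g t 0 i * (theta t 0 i - theta_star 0 i) <=
    (\sum_(i < d) Num.sqrt (s t 0 i) * (theta t 0 i - theta_star 0 i) ^+ 2
     - \sum_(i < d) Num.sqrt (s t 0 i) * (theta t.+1 0 i - theta_star 0 i) ^+ 2)
      / (2 * (alpha / Num.sqrt t%:R))
    + \sum_(i < d) beta1t t * Num.sqrt (s t 0 i) * Dinf ^+ 2
        / (2 * (alpha / Num.sqrt t%:R) * (1 - beta1))
    + \sum_(i < d) alpha / (2 * Num.sqrt c)
        * ((g t 0 i ^+ 2 + beta1 * m t.-1 0 i ^+ 2) / Num.sqrt t%:R).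
  move=> t Ht.
  have [r0 r1] := hr t Ht.
  have [_ rb] := hb1t t Ht.
  have t1 : (1 <= t)%N by case/andP: Ht.
  have P := @proj_ineq R d F (\row_i Num.sqrt (s t 0 i))
     (\row_i (theta t 0 i - alpha / Num.sqrt t%:R * m t 0 i / Num.sqrt (s t 0 i)))
     (theta t.+1) theta_star cF (fun i => ltac:(by rewrite mxE sqrtr_ge0)) (hproj t Ht) Fst.
  have E1 : wdist2 (\row_i Num.sqrt (s t 0 i)) (theta t.+1) theta_star
      = \sum_(i < d) Num.sqrt (s t 0 i) * (theta t.+1 0 i - theta_star 0 i) ^+ 2.
    by apply: eq_bigr => i _; rewrite !mxE.
  have E2 : wdist2 (\row_i Num.sqrt (s t 0 i)) theta_star
     (\row_i (theta t 0 i - alpha / Num.sqrt t%:R * m t 0 i / Num.sqrt (s t 0 i)))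
    = \sum_(i < d) Num.sqrt (s t 0 i) * ((theta t 0 i - theta_star 0 i)
          - alpha / Num.sqrt t%:R * m t 0 i / Num.sqrt (s t 0 i)) ^+ 2.
    by apply: eq_bigr => i _; rewrite !mxE; ring.
  rewrite E1 E2 in P.
  have H1 := ler_sum (index_enum 'I_d) (P := xpredT) (fun i (_ : true) =>
     @step_alg R (g t 0 i) (m t 0 i) (m t.-1 0 i) (theta t 0 i - theta_star 0 i)
       (Num.sqrt (s t 0 i)) (alpha / Num.sqrt t%:R) (beta1t t)
       (ws t i Ht).2 (at0 t t1) r0 r1
       ltac:(by rewrite (hm t Ht) !mxE)).
  apply: (le_trans H1); rewrite !big_split /=.
  apply: lerD; first apply: lerD.
  - rewrite -mulr_suml sumrB; apply: ler_wpM2r.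
      by rewrite invr_ge0 mulr_ge0 //; exact/ltW/(at0 t t1).
    by apply: lerB.
  - apply: ler_sum => i _; apply: aux_b => //.
    + exact: at0 t t1.
    + exact: sqr_ge0.
    + exact: xD.
  - apply: ler_sum => i _.
    have [h1 h2] := ws t i Ht.
    by apply: aux_c => //; [exact: st0 | exact: sqr_ge0 | exact: sqr_ge0 | exact: ltW].
have S3 := le_trans S1 (@ler_sum_nat R 1 N.+1 _ _ (fun t Ht => S2 t Ht)).
rewrite !big_split /= in S3.
have TA : \sum_(1 <= t < N.+1)
    (\sum_(i < d) Num.sqrt (s t 0 i) * (theta t 0 i - theta_star 0 i) ^+ 2
     - \sum_(i < d) Num.sqrt (s t 0 i) * (theta t.+1 0 i - theta_star 0 i) ^+ 2)
      / (2 * (alpha / Num.sqrt t%:R))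
   <= Dinf ^+ 2 * Num.sqrt N%:R / (2 * alpha) * \sum_(i < d) Num.sqrt (s N 0 i).
  have -> : \sum_(1 <= t < N.+1)
    (\sum_(i < d) Num.sqrt (s t 0 i) * (theta t 0 i - theta_star 0 i) ^+ 2
     - \sum_(i < d) Num.sqrt (s t 0 i) * (theta t.+1 0 i - theta_star 0 i) ^+ 2)
      / (2 * (alpha / Num.sqrt t%:R))
    = \sum_(i < d) \sum_(1 <= t < N.+1)
        (Num.sqrt (s t 0 i) / (alpha / Num.sqrt t%:R)) *
        ((theta t 0 i - theta_star 0 i) ^+ 2 - (theta t.+1 0 i - theta_star 0 i) ^+ 2) / 2.
    rewrite exchange_big /=; apply: eq_big_nat => t Ht.
    rewrite -sumrB mulr_suml; apply: eq_bigr => i _.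
    have t1 : (1 <= t)%N by case/andP: Ht.
    by field; rewrite !gt_eqF // st0.
  rewrite mulr_sumr; apply: ler_sum => i _.
  rewrite -mulr_suml.
  have stm : forall t, Num.sqrt (t%:R : R) <= Num.sqrt (t.+1%:R).
    by move=> t; rewrite ler_wsqrtr // ler_nat.
  have := @abel R (fun t => Num.sqrt (s t 0 i) / (alpha / Num.sqrt t%:R))
    (fun t => (theta t 0 i - theta_star 0 i) ^+ 2) (Dinf ^+ 2) N N1.
  move=> /(_ _ _ _ _) H.
  have H' := H (fun t t1 tN => @aux_v R _ _ _ _ _ al0 (ltW (ws t i (andb_true_intro (conj t1 (ltnW tN)))).2)
         (ler_wsqrtr (smon t (andb_true_intro (conj t1 (ltnW tN))) i)) (st0 t t1)
         (stm t))
     (divr_ge0 (ltW (ws 1%N i (andb_true_intro (conj isT N1))).2) (ltW (at0 1%N isT)))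
     (fun t Ht => xD t i Ht) (fun t => sqr_ge0 _).
  apply: le_trans (ler_wpM2r _ H') _; first by rewrite invr_ge0.
  rewrite le_eqVlt; apply/orP; left; apply/eqP.
  by field; rewrite !gt_eqF // st0.
have TB : \sum_(1 <= t < N.+1) \sum_(i < d) beta1t t * Num.sqrt (s t 0 i) * Dinf ^+ 2
        / (2 * (alpha / Num.sqrt t%:R) * (1 - beta1))
    = Dinf ^+ 2 / (2 * (1 - beta1)) * \sum_(1 <= t < N.+1) \sum_(i < d)
           beta1t t * Num.sqrt (s t 0 i) / (alpha / Num.sqrt t%:R).
  rewrite mulr_sumr; apply: eq_big_nat => t Ht.
  have t1 : (1 <= t)%N by case/andP: Ht.
  rewrite mulr_sumr; apply: eq_bigr => i _.
  by field; rewrite !gt_eqF ?st0 //; lra.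
have TC : \sum_(1 <= t < N.+1) \sum_(i < d) alpha / (2 * Num.sqrt c)
        * ((g t 0 i ^+ 2 + beta1 * m t.-1 0 i ^+ 2) / Num.sqrt t%:R)
   <= (1 + beta1) * alpha * Num.sqrt (1 + ln N%:R)
       / (2 * Num.sqrt c * (1 - beta1) ^+ 3)
       * \sum_(i < d) Num.sqrt (\sum_(1 <= t < N.+1) (g t 0 i ^+ 2) ^+ 2).
  rewrite exchange_big /= [in X in _ <= X]mulr_sumr; apply: ler_sum => i _.
  rewrite -mulr_sumr.
  have -> : \sum_(1 <= t < N.+1) (g t 0 i ^+ 2 + beta1 * m t.-1 0 i ^+ 2) / Num.sqrt t%:R
     = \sum_(1 <= t < N.+1) g t 0 i ^+ 2 / Num.sqrt t%:R
       + beta1 * \sum_(1 <= t < N.+1) m t.-1 0 i ^+ 2 / Num.sqrt t%:R.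
    rewrite mulr_sumr -big_split /=; apply: eq_bigr => t _.
    by rewrite mulrDl mulrA.
  apply: aux_C => //.
  - by apply: sumr_ge0 => t _; apply: divr_ge0; [exact: sqr_ge0 | exact: sqrtr_ge0].
  - apply: (@mom_sum R (fun t => m t 0 i ^+ 2) (fun t => g t 0 i ^+ 2)) => //.
    + by rewrite m0 mxE expr0n.
    + by move=> t; exact: sqr_ge0.
    + by move=> t; exact: sqr_ge0.
    + move=> t Ht.
      have [r0 r1] := hr t Ht.
      have [_ rb] := hb1t t Ht.
      rewrite (hm t Ht) !mxE -subr_ge0.
      set rr := beta1t t in r0 r1 rb *; set gi := g t 0 i; set mi := m t.-1 0 i.
      have -> : gi ^+ 2 + beta1 * mi ^+ 2 - (rr * mi + (1 - rr) * gi) ^+ 2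
          = rr * (1 - rr) * (gi - mi) ^+ 2 + (beta1 - rr) * mi ^+ 2 + rr * gi ^+ 2.
        by ring.
      apply: addr_ge0; first apply: addr_ge0.
      * apply: mulr_ge0; last exact: sqr_ge0.
        by apply: mulr_ge0 => //; lra.
      * by apply: mulr_ge0; [lra | exact: sqr_ge0].
      * by apply: mulr_ge0 => //; exact: sqr_ge0.
  - exact: (@cs_psi R (fun t => g t 0 i ^+ 2) N).
have sum0 : 0 <= \sum_(i < d) Num.sqrt (s N 0 i).
  by apply: sumr_ge0 => i _; exact: sqrtr_ge0.
have TA' : Dinf ^+ 2 * Num.sqrt N%:R / (2 * alpha) * \sum_(i < d) Num.sqrt (s N 0 i)
   <= Dinf ^+ 2 * Num.sqrt N%:R / (2 * alpha * (1 - beta1)) * \sum_(i < d) Num.sqrt (s N 0 i).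
  apply: ler_wpM2r => //; apply: aux_d => //; last by lra.
  by apply: mulr_ge0; [exact: sqr_ge0 | exact: sqrtr_ge0].
rewrite TB in S3.
have := le_trans S3 (lerD (lerD (le_trans TA TA') (lexx _)) TC).
move=> H; rewrite big_split /=; apply: (le_trans H).
by rewrite -!addrA lerD2l addrC.
Qed.
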